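(* Let $H \le G$ be finite groups such that the interval $[H,G]$ is a Boolean lattice. Then there exists $g \in G$ with $\langle H, g\rangle = G$.
   Context: The interval $[H,G]$ is the lattice of subgroups $K$ with $H \le K \le G$ (meet = intersection, join = generated subgroup). A finite lattice is Boolean if it is isomorphic to the lattice of all subsets of a finite set. *)

(* Defs.v *)
From mathcomp Require Import all_boot all_fingroup.
Set Implicit Arguments. Unset Strict Implicit. Unset Printing Implicit Defensive.
Local Open Scope group_scope.

Definition in_interval (gT : finGroupType) (H G K : {group gT}) : bool :=
  (H \subset K) && (K \subset G).

(* [H,G] is Boolean: it is order-isomorphic (equivalently, lattice-isomorphic)
   to the lattice of all subsets of a finite set, taken w.l.o.g. as 'I_n. *)
Definition boolean_interval (gT : finGroupType) (H G : {group gT}) : Prop :=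
  exists (n : nat) (f : {group gT} -> {set 'I_n}),
    (forall K L : {group gT}, in_interval H G K -> in_interval H G L ->
        (K \subset L) = (f K \subset f L)) /\
    (forall S : {set 'I_n}, exists2 K : {group gT}, in_interval H G K & f K = S).

(* Main.v *)
Require Import Defs.
From mathcomp Require Import all_boot all_fingroup.
Set Implicit Arguments. Unset Strict Implicit. Unset Printing Implicit Defensive.
Local Open Scope group_scope.

Lemma gen_bool (I : finType) (gT : finGroupType) (k : nat) :
  forall (D : {set I}) (H G : {group gT}) (f : {group gT} -> {set I}),
  #|D| = k -> H \subset G ->
  (forall K L : {group gT}, in_interval H G K -> in_interval H G L ->
        (K \subset L) = (f K \subset f L)) ->
  (forall K : {group gT}, in_interval H G K -> f K \subset D) ->
  (forall S : {set I}, S \subset D -> exists2 K : {group gT}, in_interval H G K & f K = S) ->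
  exists2 g : gT, g \in G & <<H :|: [set g]>> = G.
Proof.
elim: k => [|k IH] D H G f cD sHG emb inD surj.
  have D0 : D = set0 by apply/eqP; rewrite -cards_eq0 cD.
  have intH : in_interval H G H by rewrite /in_interval subxx.
  have intG : in_interval H G G by rewrite /in_interval subxx sHG.
  have sGH : G \subset H.
    rewrite (emb _ _ intG intH).
    have := inD _ intG; rewrite D0 subset0 => /eqP ->; exact: sub0set.
  have eGH : G :=: H by apply/eqP; rewrite eqEsubset sGH sHG.
  exists 1; first exact: group1.
  rewrite eGH; have -> : H :|: [set 1] = H by apply/setUidPl; rewrite sub1set group1.
  exact: genGid.
have : 0 < #|D| by rewrite cD.
rewrite card_gt0 => /set0Pn [i Di].
have intH : in_interval H G H by rewrite /in_interval subxx.
have intG : in_interval H G G by rewrite /in_interval subxx sHG.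
have [M intM fM] := surj (D :\ i) (subD1set D i).
have [A intA fA] : exists2 A : {group gT}, in_interval H G A & f A = [set i].
  by apply: surj; rewrite sub1set.
have [K0 intK0 fK0] := surj set0 (sub0set D).
have fH0 : f H = set0.
  apply/eqP; rewrite -subset0 -fK0 -(emb _ _ intH intK0).
  by case/andP: intK0.
case/andP: (intM) => sHM sMG.
case/andP: (intA) => sHA sAG.
have intMsub : forall K : {group gT}, in_interval H M K -> in_interval H G K.
  move=> K /andP [sHK sKM]; rewrite /in_interval sHK.
  exact: subset_trans sKM sMG.
have [m mM genM] : exists2 m : gT, m \in M & <<H :|: [set m]>> = M.
  apply: (IH (D :\ i) H M f) => //.
  - by move: cD; rewrite (cardsD1 i D) Di add1n => -[].
  - by move=> K L iK iL; apply: emb; apply: intMsub.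
  - move=> K iK; rewrite -fM -(emb _ _ (intMsub _ iK) intM).
    by case/andP: iK.
  - move=> S sS.
    have sSD : S \subset D by apply: subset_trans sS (subD1set D i).
    have [K iK fK] := surj S sSD.
    exists K => //; rewrite /in_interval; case/andP: (iK) => -> _ /=.
    by rewrite (emb _ _ iK intM) fK fM.
have nAH : ~~ (A \subset H).
  rewrite (emb _ _ intA intH) fA fH0 subset0.
  by apply/eqP => /setP /(_ i); rewrite !inE eqxx.
have [a aA naH] := subsetPn nAH.
have mG : m \in G by apply: (subsetP sMG).
have aG : a \in G by apply: (subsetP sAG).
set g := m * a.
have gG : g \in G by rewrite groupM.
exists g => //.
set K := <<H :|: [set g]>>%G.
have gK : g \in K by apply: mem_gen; rewrite !inE eqxx orbT.
have sHK : H \subset K by apply: subset_trans (subsetUl H [set g]) (sub_gen _).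
have sKG : K \subset G by rewrite gen_subG subUset sHG sub1set.
have intK : in_interval H G K by rewrite /in_interval sHK sKG.
have iK : i \in f K.
  apply/negPn/negP => niK.
  have sKM : K \subset M.
    rewrite (emb _ _ intK intM) fM; apply/subsetP => x xK.
    rewrite !inE (subsetP (inD _ intK) x xK) andbT.
    by apply/eqP => exi; rewrite -exi xK in niK.
  have aM : a \in M.
    have -> : a = m^-1 * g by rewrite /g mulKg.
    by rewrite groupM ?groupV // (subsetP sKM).
  have intAM : in_interval H G (A :&: M)%G.
    by rewrite /in_interval /= subsetI sHA sHM /= (subset_trans (subsetIl _ _) sAG).
  have : (A :&: M)%G \subset H.
    rewrite (emb _ _ intAM intH); apply/subsetP => x xAM.
    have xA : x \in f A.
      by apply: (subsetP _ x xAM); rewrite -(emb _ _ intAM intA) subsetIl.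
    have xM : x \in f M.
      by apply: (subsetP _ x xAM); rewrite -(emb _ _ intAM intM) subsetIr.
    move: xA xM; rewrite fA fM !inE => /eqP ->; by rewrite eqxx.
  move/subsetP => /(_ a); rewrite inE aA aM => /(_ isT) aH.
  by rewrite aH in naH.
have sAK : A \subset K by rewrite (emb _ _ intA intK) fA sub1set.
have aK : a \in K by apply: (subsetP sAK).
have mK : m \in K.
  have -> : m = g * a^-1 by rewrite /g mulgK.
  by rewrite groupM ?groupV.
have sMK : M \subset K by rewrite -genM gen_subG subUset sHK sub1set.
apply/eqP; rewrite eqEsubset sKG /=.
rewrite (emb _ _ intG intK); apply/subsetP => x xG.
have xD := subsetP (inD _ intG) x xG.
case: (eqVneq x i) => [-> //|nxi].
have : x \in f M by rewrite fM !inE nxi xD.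
by apply: (subsetP _ x); rewrite -(emb _ _ intM intK).
Qed.

Theorem theorem2p4 (gT : finGroupType) (H G : {group gT}) :
  H \subset G -> boolean_interval H G ->
  exists2 g : gT, g \in G & <<H :|: [set g]>>%g = G.
Proof.
move=> sHG [n [f [emb surj]]].
apply: (@gen_bool _ _ _ [set: 'I_n] H G f erefl sHG emb) => //.
Qed.
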